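(* Every span-word is accepted by $\widehat{\mathcal{T}_{p/q}}$; that is, for every $n\in\mathbb{N}$, the infinite word $M_n\ominus\mu_n$ is accepted by $\widehat{\mathcal{T}_{p/q}}$.
   Context: Let $p>q>1$ be coprime integers, $A_p=\{0,\dots,p-1\}$, $A_q=\{0,\dots,q-1\}$ and $B=\{p-(2q-1),\dots,p-1\}$. For $n\in\mathbb{N}$ and $a\in\mathbb{Z}$, let $\tau(n,a)=\frac{np+a}{q}$, defined only when $q$ divides $np+a$. Let $\mathcal{T}_{p/q}$ be the deterministic automaton with state set $\mathbb{N}$, alphabet $A_p$, initial state $0$, and transitions $n\xrightarrow{a}\tau(n,a)$ for $a\in A_p$ with $\tau(n,a)$ defined. Every state $n$ has exactly one outgoing transition labelled by a letter of $A_q$ and exactly one labelled by a letter of $\{p-q,\dots,p-1\}$; the minimal word $\mu_n\in A_q^{\omega}$ (resp. maximal word $M_n\in\{p-q,\dots,p-1\}^{\omega}$) is the unique infinite word over $A_q$ (resp. over $\{p-q,\dots,p-1\}$) labelling a path of $\mathcal{T}_{p/q}$ starting at $n$. The span-word of $n$ is $M_n\ominus\mu_n$, where $\ominus$ denotes letter-wise subtraction; it is a word over $B$. Let $\widehat{\mathcal{T}_{p/q}}$ be the deterministic automaton with state set $\mathbb{N}$, alphabet $B$, initial state $0$, and transitions $n\xrightarrow{a}\tau(n,a)$ for $a\in B$ with $\tau(n,a)$ defined. An infinite word is accepted by an automaton if every finite prefix labels a path starting at the initial state $0$. *)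

(* Defs.v *)
From mathcomp Require Import all_boot all_order all_algebra.
Set Implicit Arguments. Unset Strict Implicit. Unset Printing Implicit Defensive.
Import Order.TTheory GRing.Theory Num.Theory.
Local Open Scope ring_scope.

(* One transition n --a--> m of T_{p/q}: m = tau(n,a) = (n p + a)/q, i.e.
   q * m = n * p + a with m a natural number (this encodes both that q divides
   n p + a and that the result is a state in N). *)
Definition step (p q : nat) (n : nat) (a : int) (m : nat) : Prop :=
  (m * q)%:Z = (n * p)%:Z + a.

Definition in_Aq (q : nat) (a : int) : Prop := 0 <= a /\ a < q%:Z.
Definition in_max_alph (p q : nat) (a : int) : Prop :=
  (p%:Z - q%:Z) <= a /\ a < p%:Z.
Definition in_B (p q : nat) (a : int) : Prop :=
  (p%:Z - (2 * q)%:Z + 1) <= a /\ a < p%:Z.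

Definition labels_path (L : int -> Prop) (p q n : nat) (w : nat -> int) : Prop :=
  exists s : nat -> nat, s 0%N = n /\
    forall k : nat, L (w k) /\ step p q (s k) (w k) (s k.+1).

Definition is_min_word (p q n : nat) (mu : nat -> int) : Prop :=
  labels_path (in_Aq q) p q n mu.

Definition is_max_word (p q n : nat) (M : nat -> int) : Prop :=
  labels_path (in_max_alph p q) p q n M.

Definition accepted_hat (p q : nat) (w : nat -> int) : Prop :=
  forall m : nat, exists s : nat -> nat, s 0%N = 0%N /\
    forall k : nat, (k < m)%N -> in_B p q (w k) /\ step p q (s k) (w k) (s k.+1).

(* Main.v *)
Require Import Defs.
From mathcomp Require Import all_boot all_order all_algebra.
From mathcomp Require Import zify.
Import Order.TTheory GRing.Theory Num.Theory.
Local Open Scope ring_scope.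

Theorem mainTheorem6 (p q : nat) (Hqp : (q < p)%N) (Hq : (1 < q)%N)
  (Hcop : coprime p q) (n : nat) (mu M : nat -> int) :
  is_min_word p q n mu -> is_max_word p q n M ->
  accepted_hat p q (fun k => M k - mu k).
Proof.
move=> [s [s0 Hs]] [t [t0 Ht]] m.
have Hle : forall k, (s k <= t k)%N.
  elim=> [|k IH]; first by rewrite s0 t0.
  have [[a1 a2] e1] := Hs k; have [[b1 b2] e2] := Ht k.
  move: e1 e2; rewrite /step => e1 e2.
  rewrite /in_Aq in a1 a2; rewrite /in_max_alph in b1 b2.
  have Hk: (s k * p <= t k * p)%N by rewrite leq_mul2r IH orbT.
  nia.
exists (fun k => (t k - s k)%N); split; first by rewrite s0 t0 subnn.
move=> k _.
have [[a1 a2] e1] := Hs k; have [[b1 b2] e2] := Ht k.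
move: e1 e2; rewrite /step /in_B => e1 e2.
rewrite /in_Aq in a1 a2; rewrite /in_max_alph in b1 b2.
have H1 := Hle k; have H2 := Hle k.+1.
split; first lia.
rewrite !mulnBl; nia.
Qed.
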